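(* Define $\tau_{k} = \{T \mid T \subseteq \Omega, |T| = k \in \mathbb{N} \}$ and let $\mathcal{B}_m$ denote any set of binary strings, such that the strings are of length $m$ or less. Let \[ R = \{(T, F) \mid T \in \tau_{k}, F \in \mathcal{B}_m \}, \quad R_{q_{\text{min}}} = \{(T, F) \mid T \in \tau_{k}, F \in \mathcal{B}_m, \phi(T,F) \geq q_{\text{min}} \}, \] where $\phi(T,F)$ is the decomposable probability-of-success metric for algorithm $\mathcal{A}$ on problem $(\Omega, T, F)$. Then for any $m \in \mathbb{N}$, \[ \frac{|R_{q_{\text{min}}}|}{|R|} \leq \frac{p}{q_{\text{min}}}, \] where $p = k/|\Omega|$.
   Context: Algorithmic search framework: finite discrete search space $\Omega$, target sets $T\subseteq\Omega$ with indicator vectors $\mathbf{t}$, information resources $F$ (here binary strings), and a fixed search algorithm $\mathcal{A}$. A probability-of-success metric $\phi$ is decomposable if there exists a probability vector $\mathbf{P}_{\phi,f}$ over $\Omega$, not a function of the target, with $\phi(t,f)=\mathbf{t}^{\top}\mathbf{P}_{\phi,f}=P_\phi(X\in t\mid f)$. $q_{\text{min}}\in(0,1]$ is a success threshold. *)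

(* Defs.v *)
From HB Require Import structures.
From mathcomp Require Import all_boot all_order all_algebra.
Set Implicit Arguments. Unset Strict Implicit. Unset Printing Implicit Defensive.
Import Order.TTheory GRing.Theory Num.Theory.
Local Open Scope ring_scope.

Definition bitstring := seq bool.

Definition tau (Omega : finType) (k : nat) : {set {set Omega}} :=
  [set T : {set Omega} | #|T| == k].

Definition prob_vec (R : numDomainType) (Omega : finType) (P : Omega -> R) : Prop :=
  (forall x, 0 <= P x) /\ \sum_(x : Omega) P x = 1.

(* phi is decomposable on the information resources in B: there is a family of
   probability vectors P_F (depending on F only, not on the target) with
   phi(T,F) = t^T P_F = sum_{x in T} P_F(x). *)
Definition decomposable (R : numDomainType) (Omega : finType)
    (B : seq bitstring) (phi : {set Omega} -> bitstring -> R) : Prop :=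
  exists P : bitstring -> Omega -> R,
    forall F, F \in B ->
      prob_vec (P F) /\ forall T : {set Omega}, phi T F = \sum_(x in T) P F x.

Definition pairsR (Omega : finType) (k : nat) (B : seq bitstring)
    : seq ({set Omega} * bitstring) :=
  [seq (T, F) | T <- enum (tau Omega k), F <- B].

Definition pairsRq (R : numDomainType) (Omega : finType) (k : nat)
    (B : seq bitstring) (phi : {set Omega} -> bitstring -> R) (qmin : R)
    : seq ({set Omega} * bitstring) :=
  [seq TF <- pairsR Omega k B | qmin <= phi TF.1 TF.2].

(* Main.v *)
Require Import Defs.
From HB Require Import structures.
From mathcomp Require Import all_boot all_order all_algebra.
Import Order.TTheory GRing.Theory Num.Theory.
Local Open Scope ring_scope.
Set Implicit Arguments. Unset Strict Implicit.

Definition swp (O : finType) (x y z : O) : O :=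
  if z == x then y else if z == y then x else z.

Lemma swpK (O : finType) (x y : O) : involutive (swp x y).
Proof.
move=> z; rewrite /swp.
case: (eqVneq z x) => [->|zx].
  by case: (eqVneq y x) => [->|yx]; rewrite ?eqxx // eqxx.
case: (eqVneq z y) => [->|zy]; first by rewrite eqxx.
by rewrite (negPf zx) (negPf zy).
Qed.

Definition cnt (O : finType) (k : nat) (x : O) : nat :=
  #|[set T in tau O k | x \in T]|.

Lemma cnt_le (O : finType) k (x y : O) : (cnt k x <= cnt k y)%N.
Proof.
rewrite /cnt.
set f := fun T : {set O} => swp x y @: T.
have fK : involutive f.
  by move=> T; rewrite /f -imset_comp (eq_imset _ (swpK x y)) imset_id.
rewrite -(card_imset _ (inv_inj fK)); apply: subset_leq_card.
apply/subsetP => U /imsetP [T]; rewrite !inE => /andP [HT xT] ->.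
rewrite /f card_imset; last exact: inv_inj (swpK x y).
rewrite (eqP HT) eqxx /=.
apply/imsetP; exists x => //; rewrite /swp eqxx //.
Qed.

Lemma cnt_const (O : finType) k (x y : O) : cnt k x = cnt k y.
Proof. by apply/eqP; rewrite eqn_leq !cnt_le. Qed.

Lemma cnt_eq (O : finType) k (x : O) : cnt k x = (\sum_(T in tau O k) (x \in T))%N.
Proof.
rewrite /cnt -sum1_card big_mkcond /= [RHS]big_mkcond /=.
by apply: eq_bigr => T _; rewrite !inE; case: (#|T| == k); case: (x \in T).
Qed.

Lemma cnt_sum (O : finType) k : (\sum_(x : O) cnt k x = k * #|tau O k|)%N.
Proof.
rewrite (eq_bigr (fun x => \sum_(T in tau O k) (x \in T))%N); last by move=> x _; exact: cnt_eq.
rewrite exchange_big /= (eq_bigr (fun _ => k)); first by rewrite sum_nat_const mulnC.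
move=> T; rewrite inE => /eqP <-.
by rewrite -sum1_card [RHS]big_mkcond /=; apply: eq_bigr => x _; case: (x \in T).
Qed.

Lemma count_allpairs (S T U : Type) (f : S -> T -> U) (a : pred U) s t :
  count a [seq f x y | x <- s, y <- t] = (\sum_(x <- s) count (fun y => a (f x y)) t)%N.
Proof.
elim: s => [|x s IH]; first by rewrite big_nil.
by rewrite /= count_cat count_map big_cons IH.
Qed.

Theorem theorem4 (R : realFieldType) (Omega : finType) (k m : nat)
    (B : seq bitstring) (phi : {set Omega} -> bitstring -> R) (qmin : R) :
  uniq B ->
  (forall F, F \in B -> (size F <= m)%N) ->
  decomposable B phi ->
  0 < qmin -> qmin <= 1 ->
  (size (@pairsRq R Omega k B phi qmin))%:R / (size (@pairsR Omega k B))%:R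
    <= ((k%:R / #|Omega|%:R) : R) / qmin.
Proof.
move=> _ _ [P HP] q0 _.
have Sz : size (pairsR Omega k B) = (#|tau Omega k| * size B)%N.
  by rewrite /pairsR size_allpairs cardE.
have rhs0 : 0 <= ((k%:R / #|Omega|%:R) : R) / qmin.
  by rewrite !divr_ge0 // ltW.
case: (posnP (size (pairsR Omega k B))) => [->|Spos].
  by rewrite invr0 mulr0.
have Bpos : (0 < size B)%N by move: Spos; rewrite Sz muln_gt0 => /andP [].
have Npos : (0 < #|tau Omega k|)%N by move: Spos; rewrite Sz muln_gt0 => /andP [].
case: B Bpos HP Sz Spos => [//|F0 B'] _ HP Sz Spos.
set Q := size (pairsRq _ _ _ _).
set B := F0 :: B'.
have [[P0 P1] _] := HP F0 (mem_head _ _).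
have [x0 _] : exists x0 : Omega, true.
  case: (pickP Omega) => [x _|e]; first by exists x.
  by move: P1; rewrite big_pred0 // => /eqP; rewrite eq_sym oner_eq0.
set c := cnt k x0.
have nc : (#|Omega| * c = k * #|tau Omega k|)%N.
  rewrite -cnt_sum (eq_bigr (fun _ => c)); last by move=> x _; exact: cnt_const.
  by rewrite sum_nat_const.
have key : Q%:R * qmin <= (size B)%:R * c%:R :> R.
  have eQ : Q%:R = \sum_(T <- enum (tau Omega k)) \sum_(F <- B)
      (nat_of_bool (qmin <= phi T F))%:R :> R.
    rewrite /Q /pairsRq size_filter count_allpairs natr_sum; apply: eq_bigr => T _.
    rewrite -sum1_count big_mkcond natr_sum /=; apply: eq_bigr => F _.
    by case: ifP.
  rewrite eQ big_distrl /=.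
  apply: le_trans (_ : _ <= \sum_(T <- enum (tau Omega k)) \sum_(F <- B) phi T F) _.
    apply: ler_sum => T _; rewrite big_distrl /= big_seq_cond [X in _ <= X]big_seq_cond.
    apply: ler_sum => F /andP [FB _].
    have [[PF0 PF1] Hphi] := HP F FB.
    case: (boolP (qmin <= phi T F)) => h; rewrite ?mul1r ?mul0r //.
    by rewrite Hphi; apply: sumr_ge0 => x _.
  rewrite exchange_big /=.
  rewrite (eq_big_seq (fun _ => c%:R)).
    by rewrite -natr_sum big_const_seq count_predT iter_addn_0 mulnC natrM.
  move=> F FB; have [[PF0 PF1] Hphi] := HP F FB.
  rewrite big_enum /= (eq_bigr _ (fun T _ => Hphi T)).
  transitivity (\sum_(T in tau Omega k) \sum_x ((x \in T)%:R * P F x)).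
    by apply: eq_bigr => T _; rewrite big_mkcond /=; apply: eq_bigr => x _; case: (x \in T); rewrite ?mul1r ?mul0r.
  rewrite exchange_big /=.
  transitivity (\sum_x c%:R * P F x); last by rewrite -big_distrr /= PF1 mulr1.
  apply: eq_bigr => x _.
  by rewrite -big_distrl /= -natr_sum -cnt_eq (cnt_const k x x0).
have npos : (0 < #|Omega|)%N by apply/card_gt0P; exists x0.
rewrite ler_pdivrMr ?ltr0n // mulrAC ler_pdivlMr // mulrAC ler_pdivlMr ?ltr0n //.
apply: le_trans (ler_wpM2r (ler0n _ _) key) _.
rewrite Sz -!natrM ler_nat.
by rewrite -mulnA (mulnC c) nc mulnC mulnA.
Qed.
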